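(* Let $J=S\Upsilon_1S^{-1}=\bar S\Upsilon_2^\top\bar S^{-1}$. Then for $a=1,\dots,p_1$, $b=1,\dots,p_2$, $$J\mathcal A_a(z)=z\mathcal A_a(z),\quad J^\top\bar{\mathcal A}_b(z)=z\bar{\mathcal A}_b(z),\quad J\mathcal C_b(z)=z\mathcal C_b(z)-c_b,\quad J^\top\bar{\mathcal C}_a(z)=z\bar{\mathcal C}_a(z)-\bar c_a .$$
   Context: Setting: $\mu$ finite Borel measure on an interval, weights $w_{1,a}$ ($a\le p_1$), $w_{2,b}$ ($b\le p_2$), compositions $\vec n_\ell\in\mathbb N^{p_\ell}$; each $i\in\mathbb Z_+$ is uniquely $i=q|\vec n_\ell|+n_{\ell,1}+\dots+n_{\ell,a-1}+r$ ($0\le r<n_{\ell,a}$), $a_\ell(i)=a$, $k_\ell(i)=qn_{\ell,a}+r$; moment matrix $g_{i,j}=\int x^{k_1(i)+k_2(j)}w_{1,a_1(i)}w_{2,a_2(j)}d\mu$, assumed to have Gauss–Borel factorization $g=S^{-1}\bar S$ ($S$ unit lower triangular, $\bar S$ upper triangular invertible). $e_{\ell,a}(k)=e_i$ with $a_\ell(i)=a,k_\ell(i)=k$; $\Lambda_{\ell,a}=\sum_ke_{\ell,a}(k)e_{\ell,a}(k+1)^\top$, $\Upsilon_\ell=\sum_a\Lambda_{\ell,a}$. $\chi_{\ell,a}(z)=\sum_ke_{\ell,a}(k)z^k$ and $\chi^*_{\ell,a}(z)=z^{-1}\chi_{\ell,a}(z^{-1})$. Strings of polynomials $\mathcal A_a=S\chi_{1,a}$,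 $\bar{\mathcal A}_b=(\bar S^{-1})^\top\chi_{2,b}$; strings of second kind functions (formal series in $z^{-1}$) $\mathcal C_b=\bar S\chi^*_{2,b}(z)$, $\bar{\mathcal C}_a=(S^{-1})^\top\chi^*_{1,a}(z)$; vectors $c_b=\bar Se_{2,b}(0)$, $\bar c_a=(S^{-1})^\top e_{1,a}(0)$. *)

(* Defs.v *)
From HB Require Import structures.
From mathcomp Require Import all_boot all_order all_algebra.
From mathcomp Require Import all_classical all_reals all_analysis.
Set Implicit Arguments. Unset Strict Implicit. Unset Printing Implicit Defensive.
Import Order.TTheory GRing.Theory Num.Theory.
Local Open Scope classical_set_scope.
Local Open Scope ring_scope.

(* A composition is a seq nat of positive entries; component a (paper: a+1) is  *)
(* 0-based here.  For i = q|n| + n_1+...+n_{a-1} + r, 0 <= r < n_a:             *)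
Definition composition (n : seq nat) : Prop := (0 < size n)%N /\ all (fun m => 0 < m)%N n.

Definition aidx (n : seq nat) (i : nat) : nat :=
  let r := (i %% sumn n)%N in
  find (fun a => r < sumn (take a.+1 n))%N (iota 0 (size n)).

Definition kidx (n : seq nat) (i : nat) : nat :=
  let q := (i %/ sumn n)%N in
  let a := aidx n i in
  (q * nth 0 n a + (i %% sumn n - sumn (take a n)))%N.

Section SemiInfinite.
Variable R : realType.

(* semi-infinite matrices, vectors, and vectors of formal Laurent series       *)
(* (a series is given by its coefficient function: coefficient of z^m, m : int)*)
Definition mx := nat -> nat -> R.
Definition vec := nat -> R.
Definition svec := nat -> int -> R.

(* products: sums over the (finite, in all uses below) support *)
Definition mmul (A B : mx) : mx := fun i j => \sum_(k \in [set: nat]) A i k * B k j.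
Definition trm (A : mx) : mx := fun i j => A j i.
Definition idmx : mx := fun i j => (i == j)%:R.
Definition mvs (A : mx) (v : svec) : svec := fun i m => \sum_(l \in [set: nat]) A i l * v l m.
Definition zmul (v : svec) : svec := fun i m => v i (m - 1).
Definition cstv (c : vec) : svec := fun i m => if m == 0 then c i else 0.
Definition subs (v w : svec) : svec := fun i m => v i m - w i m.

(* Upsilon_l = sum_a Lambda_{l,a}, Lambda_{l,a} = sum_k e_{l,a}(k) e_{l,a}(k+1)^T *)
Definition Lambda (n : seq nat) (a : nat) : mx := fun i j =>
  if [&& aidx n i == a, aidx n j == a & kidx n j == (kidx n i).+1] then 1 else 0.
Definition Upsilon (n : seq nat) : mx := fun i j =>
  \sum_(a < size n) Lambda n a i j.

(* chi_{l,a}(z) = sum_k e_{l,a}(k) z^k *)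
Definition chi (n : seq nat) (a : nat) : svec := fun i m =>
  if (aidx n i == a) && (m == Posz (kidx n i)) then 1 else 0.
(* chi*_{l,a}(z) = z^{-1} chi_{l,a}(z^{-1}) = sum_k e_{l,a}(k) z^{-k-1} *)
Definition chistar (n : seq nat) (a : nat) : svec := fun i m =>
  if (aidx n i == a) && (m == - Posz (kidx n i).+1) then 1 else 0.
Definition e0 (n : seq nat) (a : nat) : vec := fun i =>
  if (aidx n i == a) && (kidx n i == 0)%N then 1 else 0.

Definition mvr (A : mx) (v : vec) : vec := fun i => \sum_(l \in [set: nat]) A i l * v l.

Definition lower_unitriangular (S : mx) : Prop :=
  (forall i j, (i < j)%N -> S i j = 0) /\ (forall i, S i i = 1).
Definition lower_triangular (S : mx) : Prop := forall i j, (i < j)%N -> S i j = 0.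
Definition upper_triangular (S : mx) : Prop := forall i j, (j < i)%N -> S i j = 0.

End SemiInfinite.

(* Main.v *)
Require Import Defs.
From HB Require Import structures.
From mathcomp Require Import all_boot all_order all_algebra.
From mathcomp Require Import all_classical all_reals all_analysis.
Set Implicit Arguments. Unset Strict Implicit. Unset Printing Implicit Defensive.
Import Order.TTheory GRing.Theory Num.Theory.
Local Open Scope classical_set_scope.
Local Open Scope ring_scope.

From mathcomp Require Import zify.

Section Idx.
Variable n : seq nat.
Hypothesis Hn : composition n.
Local Notation pre a := (sumn (take a n)).
Local Notation s := (sumn n).

Lemma pre_mono a b : (a <= b)%N -> (pre a <= pre b)%N.
Proof.
move=> Hab; rewrite -(subnKC Hab) takeD sumn_cat; exact: leq_addr.
Qed.

Lemma nth_pos a : (a < size n)%N -> (0 < nth 0 n a)%N.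
Proof. by case: Hn => _ /all_nthP; apply. Qed.

Lemma pre_succ a : (a < size n)%N -> pre a.+1 = (pre a + nth 0 n a)%N.
Proof. by move=> Ha; rewrite (take_nth 0 Ha) -cats1 sumn_cat /= addn0. Qed.

Lemma s_pos : (0 < s)%N.
Proof.
case: Hn; case: n => //= x l _ /andP[Hx _]; exact: ltn_addr.
Qed.

Lemma aidx_lt i : (aidx n i < size n)%N.
Proof.
rewrite /aidx; set P := (fun a => _).
have : (find P (iota 0 (size n)) < size (iota 0 (size n)))%N; last by rewrite size_iota.
rewrite -has_find; apply/hasP; exists (size n).-1.
  by rewrite mem_iota add0n; case: Hn => Hs _; rewrite leq0n /= prednK.
by rewrite /P; case: Hn => /prednK -> _; rewrite take_size ltn_pmod // s_pos.
Qed.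

Lemma aidx_spec i : (pre (aidx n i) <= i %% s < pre (aidx n i).+1)%N.
Proof.
have Hlt := aidx_lt i; move: Hlt; rewrite /aidx; set P := (fun a => _) => Hlt.
have Hs : (find P (iota 0 (size n)) < size (iota 0 (size n)))%N by rewrite size_iota.
have := nth_find 0 (etrans (has_find _ _) Hs).
rewrite nth_iota // add0n /P => ->; rewrite andbT.
case E: (find _ _) => [|a]; first by rewrite take0.
rewrite leqNgt.
have := @before_find _ 0 P (iota 0 (size n)) a.
rewrite nth_iota ?add0n /P; last by rewrite -(size_iota 0 (size n)) (leq_trans _ Hs) // E.
by move=> H; rewrite H // E.
Qed.

Lemma aidx_uniq i a : (a < size n)%N -> (pre a <= i %% s < pre a.+1)%N -> aidx n i = a.
Proof.
move=> Ha /andP[H1 H2]; have /andP[H3 H4] := aidx_spec i.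
case: (ltngtP (aidx n i) a) => // Hc.
  have := pre_mono Hc; move=> H5; have := leq_ltn_trans (leq_trans H5 H1) H4.
  by rewrite ltnn.
have := pre_mono Hc; move=> H5; have := leq_ltn_trans (leq_trans H5 H3) H2.
by rewrite ltnn.
Qed.

Definition idx a k := (k %/ nth 0 n a * s + pre a + k %% nth 0 n a)%N.

Lemma idx_mod a k : (a < size n)%N -> (idx a k %% s = pre a + k %% nth 0 n a)%N /\ (idx a k %/ s = k %/ nth 0 n a)%N.
Proof.
move=> Ha; have Hr : (pre a + k %% nth 0 n a < s)%N.
  apply: (@leq_trans (pre a.+1)); last first.
    by rewrite -{2}(cat_take_drop a.+1 n) sumn_cat leq_addr.
  by rewrite pre_succ // ltn_add2l ltn_pmod // nth_pos.
rewrite /idx -addnA; split.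
  by rewrite modnMDl modn_small.
by rewrite divnMDl ?s_pos // (divn_small Hr) addn0.
Qed.

Lemma aidx_idx a k : (a < size n)%N -> aidx n (idx a k) = a.
Proof.
move=> Ha; apply: aidx_uniq => //; have [-> _] := idx_mod k Ha.
by rewrite leq_addr pre_succ // ltn_add2l ltn_pmod // nth_pos.
Qed.

Lemma kidx_idx a k : (a < size n)%N -> kidx n (idx a k) = k.
Proof.
move=> Ha; rewrite /kidx aidx_idx //; have [-> ->] := idx_mod k Ha.
by rewrite addKn -divn_eq.
Qed.

Lemma idx_aidx i : idx (aidx n i) (kidx n i) = i.
Proof.
have Ha := aidx_lt i; have /andP[H1 H2] := aidx_spec i.
have Hna := nth_pos Ha.
have Hr : (i %% s - pre (aidx n i) < nth 0 n (aidx n i))%N.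
  by rewrite ltn_subLR // -pre_succ.
rewrite /idx /kidx divnMDl // (divn_small Hr) addn0 modnMDl (modn_small Hr).
by rewrite -addnA subnKC // -divn_eq.
Qed.

Lemma idx_eq a k j : (a < size n)%N -> (j == idx a k) = (aidx n j == a) && (kidx n j == k).
Proof.
move=> Ha; apply/eqP/andP => [->|[/eqP <- /eqP <-]]; last by rewrite idx_aidx.
by rewrite aidx_idx // kidx_idx.
Qed.

End Idx.
Section Fs.
Variable R : realType.

Lemma fsum_bound (F : nat -> R) N : (forall k, (N <= k)%N -> F k = 0) ->
  \sum_(k \in [set: nat]) F k = \sum_(k < N) F k.
Proof.
move=> HF; rewrite fsbig_ord; apply/esym/fsbig_widen => // k [_ /=].
by move=> /negP; rewrite -leqNgt => /HF.
Qed.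

Lemma fsum_single (F : nat -> R) k0 : (forall k, k != k0 -> F k = 0) ->
  \sum_(k \in [set: nat]) F k = F k0.
Proof.
move=> HF; rewrite (@fsum_bound _ k0.+1); last first.
  by move=> k Hk; apply: HF; rewrite neq_ltn ltnNge Hk orbT.
rewrite big_ord_recr /= big1 ?add0r // => i _; apply: HF.
by rewrite neq_ltn ltn_ord.
Qed.

Lemma fsum0 (F : nat -> R) : (forall k, F k = 0) -> \sum_(k \in [set: nat]) F k = 0.
Proof. by move=> HF; apply: fsbig1 => k _. Qed.

Lemma mul_fsum_bound (F : nat -> R) c N : (c != 0 -> forall k, (N <= k)%N -> F k = 0) ->
  (\sum_(k \in [set: nat]) F k) * c = \sum_(k < N) F k * c.
Proof.
move=> HF; case: (eqVneq c 0) => [->|Hc].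
  by rewrite mulr0 big1 // => k _; rewrite mulr0.
by rewrite (fsum_bound (HF Hc)) mulr_suml.
Qed.

Lemma mul_fsum_boundl (F : nat -> R) c N : (c != 0 -> forall k, (N <= k)%N -> F k = 0) ->
  c * (\sum_(k \in [set: nat]) F k) = \sum_(k < N) c * F k.
Proof.
move=> HF; rewrite mulrC (mul_fsum_bound HF); apply: eq_bigr => k _; exact: mulrC.
Qed.

Definition gmul (T : Type) (A : mx R) (C : nat -> T -> R) : nat -> T -> R :=
  fun i j => \sum_(l \in [set: nat]) A i l * C l j.

Lemma mul0_r (x y : R) : y != 0 -> x * y = 0 -> x = 0.
Proof. by move=> Hy /eqP; rewrite mulf_eq0 (negbTE Hy) orbF => /eqP. Qed.

Lemma assoc_gen (T : Type) (A B : mx R) (C : nat -> T -> R) i j N1 N2 :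
  (forall l k, (N1 <= l)%N || (N2 <= k)%N -> A i l * B l k * C k j = 0) ->
  gmul (gmul A B) C i j = gmul A (gmul B C) i j.
Proof.
move=> H; rewrite /gmul.
have E1 : forall k, (\sum_(l \in [set: nat]) A i l * B l k) * C k j
   = \sum_(l < N1) A i l * B l k * C k j.
  move=> k; apply: mul_fsum_bound => Hc l Hl; apply: (mul0_r Hc); apply: H.
  by rewrite Hl.
have E2 : forall l, A i l * (\sum_(k \in [set: nat]) B l k * C k j)
   = \sum_(k < N2) A i l * (B l k * C k j).
  move=> l; apply: mul_fsum_boundl => Ha k Hk; apply: (mul0_r Ha).
  rewrite mulrC mulrA; apply: H; by rewrite Hk orbT.
rewrite (@fsum_bound _ N2); last first.
  move=> k Hk; rewrite E1 big1 // => l _; apply: H; by rewrite Hk orbT.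
rewrite (@fsum_bound _ N1); last first.
  move=> l Hl; rewrite E2 big1 // => k _; rewrite mulrA; apply: H; by rewrite Hl.
under eq_bigr do rewrite E1.
under [RHS]eq_bigr do rewrite E2.
rewrite exchange_big /=; apply: eq_bigr => l _; apply: eq_bigr => k _.
by rewrite mulrA.
Qed.

Definition rowfin (A : mx R) := exists f : nat -> nat, forall i l, (f i <= l)%N -> A i l = 0.
Definition colfin (T : Type) (C : nat -> T -> R) :=
  exists f : T -> nat, forall k j, (f j <= k)%N -> C k j = 0.

Lemma assoc_rc (T : Type) (A B : mx R) (C : nat -> T -> R) :
  rowfin A -> colfin C -> gmul (gmul A B) C = gmul A (gmul B C).
Proof.
move=> [fA HA] [fC HC]; apply/funext => i; apply/funext => j.
apply: (@assoc_gen _ _ _ _ _ _ (fA i) (fC j)) => l k /orP[/(HA i) ->|/HC ->].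
  by rewrite !mul0r.
by rewrite mulr0.
Qed.

Lemma maxbound (N : nat) (f : nat -> nat) l : (l < N)%N -> (f l <= \max_(l0 < N) f l0)%N.
Proof. by move=> Hl; apply: (@leq_bigmax _ (fun l0 : 'I_N => f l0) (Ordinal Hl)). Qed.

Lemma assoc_rr (T : Type) (A B : mx R) (C : nat -> T -> R) :
  rowfin A -> rowfin B -> gmul (gmul A B) C = gmul A (gmul B C).
Proof.
move=> [fA HA] [fB HB]; apply/funext => i; apply/funext => j.
apply: (@assoc_gen _ _ _ _ _ _ (fA i) (\max_(l < fA i) fB l)) => l k /orP[/(HA i) ->|Hk].
  by rewrite !mul0r.
case: (ltnP l (fA i)) => Hl; last by rewrite HA // !mul0r.
by rewrite HB ?mulr0 ?mul0r // (leq_trans (maxbound _ Hl)).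
Qed.

Lemma assoc_cc (T : Type) (A B : mx R) (C : nat -> T -> R) :
  colfin B -> colfin C -> gmul (gmul A B) C = gmul A (gmul B C).
Proof.
move=> [fB HB] [fC HC]; apply/funext => i; apply/funext => j.
apply: (@assoc_gen _ _ _ _ _ _ (\max_(k < fC j) fB k) (fC j)) => l k /orP[Hl|/HC ->];
  last by rewrite mulr0.
case: (ltnP k (fC j)) => Hk; last by rewrite HC // mulr0.
by rewrite HB ?mulr0 ?mul0r // (leq_trans (maxbound _ Hk)).
Qed.

Lemma rowfin_mul (A B : mx R) : rowfin A -> rowfin B -> rowfin (gmul A B).
Proof.
move=> [fA HA] [fB HB]; exists (fun i => \max_(l < fA i) fB l) => i k Hk.
apply: fsum0 => l; case: (ltnP l (fA i)) => Hl; last by rewrite HA // mul0r.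
by rewrite HB ?mulr0 // (leq_trans (maxbound _ Hl)).
Qed.

Lemma colfin_mul (T : Type) (A : mx R) (C : nat -> T -> R) : colfin A -> colfin C -> colfin (gmul A C).
Proof.
move=> [fA HA] [fC HC]; exists (fun j => \max_(k < fC j) fA k) => i j Hi.
apply: fsum0 => l; case: (ltnP l (fC j)) => Hl; last by rewrite HC // mulr0.
by rewrite HA ?mul0r // (leq_trans (maxbound _ Hl)).
Qed.

Lemma rowfin_trm (A : mx R) : colfin A -> rowfin (trm A).
Proof. by move=> [f H]; exists f => i l Hl; exact: H. Qed.
Lemma colfin_trm (A : mx R) : rowfin A -> colfin (trm A).
Proof. by move=> [f H]; exists f => i l Hl; exact: H. Qed.
Lemma rowfin_lower (A : mx R) : lower_triangular A -> rowfin A.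
Proof. by move=> H; exists S => i l Hl; exact: H. Qed.
Lemma colfin_upper (A : mx R) : upper_triangular A -> colfin A.
Proof. by move=> H; exists S => i l Hl; exact: H. Qed.

Lemma gmul_id_r (A : mx R) : gmul A (idmx R) = A.
Proof.
apply/funext => i; apply/funext => j; rewrite /gmul (@fsum_single _ j).
  by rewrite /idmx eqxx mulr1.
by move=> k Hk; rewrite /idmx (negbTE Hk) mulr0.
Qed.

Lemma gmul_id_l (T : Type) (A : nat -> T -> R) : gmul (idmx R) A = A.
Proof.
apply/funext => i; apply/funext => j; rewrite /gmul (@fsum_single _ i).
  by rewrite /idmx eqxx mul1r.
by move=> k Hk; rewrite /idmx eq_sym (negbTE Hk) mul0r.
Qed.

Lemma trm_mul (A B : mx R) : trm (mmul A B) = mmul (trm B) (trm A).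
Proof.
apply/funext => i; apply/funext => j; rewrite /trm /mmul.
by apply: eq_fsbigr => k _; rewrite mulrC.
Qed.

Lemma trm_id : trm (idmx R) = idmx R.
Proof. by apply/funext => i; apply/funext => j; rewrite /trm /idmx eq_sym. Qed.

Lemma trmK (A : mx R) : trm (trm A) = A.
Proof. by []. Qed.



Lemma int_sub1 (m : int) (k : nat) : (m - 1 == Posz k) = (m == Posz k.+1).
Proof. apply/eqP/eqP; lia. Qed.
Lemma int_sub1n (m : int) (k : nat) : (m - 1 == - Posz k.+1) = (m == - Posz k).
Proof. apply/eqP/eqP; lia. Qed.

Definition sc (n : seq nat) i := idx n (aidx n i) (kidx n i).+1.

Section Ups.
Variable n : seq nat.
Hypothesis Hn : composition n.

Lemma aidx_sc i : aidx n (sc n i) = aidx n i.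
Proof. exact: aidx_idx (aidx_lt Hn i). Qed.
Lemma kidx_sc i : kidx n (sc n i) = (kidx n i).+1.
Proof. exact: kidx_idx (aidx_lt Hn i). Qed.

Lemma Ups_sc i j : Upsilon R n i j = (j == sc n i)%:R.
Proof.
rewrite /Upsilon (bigD1 (Ordinal (aidx_lt Hn i))) //= big1 ?addr0; last first.
  move=> a Ha; rewrite /Lambda; case: eqP => //= E; exfalso; move: Ha.
  by rewrite eqE /= E eqxx.
rewrite /Lambda eqxx /= /sc idx_eq ?(aidx_lt Hn) //.
by case: (_ && _).
Qed.

Lemma rowfin_Ups : rowfin (Upsilon R n).
Proof.
exists (fun i => (sc n i).+1) => i l Hl; rewrite Ups_sc.
by case: eqP => // E; move: Hl; rewrite E ltnn.
Qed.

Lemma Ups_chi a : gmul (Upsilon R n) (chi R n a) = zmul (chi R n a).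
Proof.
apply/funext => i; apply/funext => m; rewrite /gmul (@fsum_single _ (sc n i)); last first.
  by move=> k Hk; rewrite Ups_sc (negbTE Hk) mul0r.
rewrite Ups_sc eqxx mul1r /zmul /chi aidx_sc kidx_sc int_sub1 //.
Qed.

Lemma Ups_chistar b : gmul (trm (Upsilon R n)) (chistar R n b)
   = subs (zmul (chistar R n b)) (cstv (e0 R n b)).
Proof.
apply/funext => i; apply/funext => m; rewrite /gmul /trm /subs /zmul /cstv /chistar /e0.
case E: (kidx n i) => [|k].
  rewrite fsum0; last first.
    move=> l; rewrite Ups_sc; case: eqP => [Ei|]; last by rewrite mul0r.
    by move: E; rewrite Ei kidx_sc.
  rewrite int_sub1n /=; case: (aidx n i == b) => /=; last by case: (m == 0); rewrite subrr.
  by case: (m == 0); rewrite subrr.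
rewrite (@fsum_single _ (idx n (aidx n i) k)); last first.
  move=> l Hl; rewrite Ups_sc; case: eqP => [Ei|]; last by rewrite mul0r.
  exfalso; move/negP: Hl; apply; apply/eqP.
  move: E; rewrite Ei aidx_sc kidx_sc => -[<-]; by rewrite idx_aidx.
rewrite Ups_sc.
have -> : i == sc n (idx n (aidx n i) k).
  by rewrite /sc aidx_idx ?(aidx_lt Hn) // kidx_idx ?(aidx_lt Hn) // -E idx_aidx.
rewrite mul1r aidx_idx ?(aidx_lt Hn) // kidx_idx ?(aidx_lt Hn) // int_sub1n.
by case: (m == 0); rewrite ?andbF ?subr0.
Qed.

End Ups.

Lemma colfin_chi n a : composition n -> colfin (chi R n a).
Proof.
move=> Hn; exists (fun m => (idx n a `|m|%N).+1) => k m Hk; rewrite /chi.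
case: ifP => // /andP[/eqP Ha /eqP Hm]; exfalso; move: Hk.
by rewrite Hm /= -Ha idx_aidx // ltnn.
Qed.

Lemma colfin_chistar n a : composition n -> colfin (chistar R n a).
Proof.
move=> Hn; exists (fun m => (idx n a `|m|%N.-1).+1) => k m Hk; rewrite /chistar.
case: ifP => // /andP[/eqP Ha /eqP Hm]; exfalso; move: Hk.
by rewrite Hm abszN /= -Ha idx_aidx // ltnn.
Qed.

Lemma e0_bound n a l : composition n -> ((idx n a 0).+1 <= l)%N -> e0 R n a l = 0.
Proof.
move=> Hn; rewrite /e0; case: ifP => // /andP[/eqP Ha /eqP Hk].
by rewrite -Ha -Hk idx_aidx // ltnn.
Qed.

Lemma lin_lem (P : mx R) (v : svec R) (e : vec R) N :
  colfin v -> (forall l, (N <= l)%N -> e l = 0) ->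
  gmul P (subs (zmul v) (cstv e)) = subs (zmul (gmul P v)) (cstv (mvr P e)).
Proof.
move=> [fv Hv] He; apply/funext => i; apply/funext => m.
rewrite /gmul /subs /zmul /cstv /mvr.
set M := maxn (fv (m - 1)) N.
rewrite (@fsum_bound _ M); last first.
  move=> l Hl; rewrite Hv ?He ?(leq_trans _ Hl) ?leq_maxr ?leq_maxl //.
  by case: (m == 0); rewrite subrr mulr0.
rewrite (@fsum_bound _ M); last first.
  by move=> l Hl; rewrite Hv ?(leq_trans _ Hl) ?leq_maxl // mulr0.
case: (m == 0).
  rewrite (@fsum_bound _ M); last first.
    by move=> l Hl; rewrite He ?(leq_trans _ Hl) ?leq_maxr // mulr0.
  by rewrite -sumrB; apply: eq_bigr => l _; rewrite mulrBr.
by rewrite subr0; apply: eq_bigr => l _; rewrite subr0.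
Qed.

Lemma eig1 (P Pi Y : mx R) (v w : svec R) :
  rowfin P -> rowfin Pi -> rowfin Y -> colfin v -> gmul Pi P = idmx R -> gmul Y v = w ->
  gmul (gmul (gmul P Y) Pi) (gmul P v) = gmul P w.
Proof.
move=> HP HPi HY Hv HPP Hw.
have HJ : rowfin (gmul (gmul P Y) Pi) by apply: rowfin_mul => //; apply: rowfin_mul.
rewrite -(assoc_rc _ HJ Hv) (assoc_rr _ (rowfin_mul HP HY) HPi) HPP gmul_id_r.
by rewrite (assoc_rr _ HP HY) Hw.
Qed.

Lemma eig2 (J P Pi Z : mx R) (v w : svec R) :
  rowfin J -> colfin P -> colfin Pi -> colfin Z -> colfin v ->
  J = gmul (gmul P Z) Pi -> gmul Pi P = idmx R -> gmul Z v = w ->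
  gmul J (gmul P v) = gmul P w.
Proof.
move=> HJ HP HPi HZ Hv EJ HPP Hw.
rewrite -(assoc_rc _ HJ Hv) EJ (assoc_cc _ HPi HP) HPP gmul_id_r.
by rewrite (assoc_cc _ HZ Hv) Hw.
Qed.

End Fs.

Lemma shift_lem (R : realType) (mu : {finite_measure set R -> \bar R}) (I : interval R)
  (n1 n2 : seq nat) (w1 w2 : nat -> R -> R) (Sinv Sb : mx R) :
  composition n1 -> composition n2 ->
  (forall i j, Rintegral mu [set` I]
     (fun x => x ^+ (kidx n1 i + kidx n2 j) * w1 (aidx n1 i) x * w2 (aidx n2 j) x)
     = mmul Sinv Sb i j) ->
  gmul (Upsilon R n1) (gmul Sinv Sb) = gmul (gmul Sinv Sb) (trm (Upsilon R n2)).
Proof.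
move=> Hn1 Hn2 Hg; apply/funext => i; apply/funext => j.
rewrite /gmul (@fsum_single _ _ (sc n1 i)); last first.
  by move=> k Hk; rewrite Ups_sc // (negbTE Hk) mul0r.
rewrite [RHS](@fsum_single _ _ (sc n2 j)); last first.
  by move=> k Hk; rewrite /trm Ups_sc // (negbTE Hk) mulr0.
rewrite /trm !Ups_sc // !eqxx mul1r mulr1.
have := Hg (sc n1 i) j; have := Hg i (sc n2 j); rewrite /mmul => <- <-.
by rewrite !aidx_sc // !kidx_sc // addSn addnS.
Qed.

Unset Implicit Arguments.
Set Strict Implicit.
Theorem proposition2p14 (R : realType)
  (mu : {finite_measure set R -> \bar R}) (I : interval R)
  (n1 n2 : seq nat) (w1 w2 : nat -> R -> R)
  (S Sinv Sb Sbinv : mx R) :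
  composition n1 -> composition n2 ->
  (* the moments exist *)
  (forall i j, mu.-integrable [set` I]
     (fun x => (x ^+ (kidx n1 i + kidx n2 j) * w1 (aidx n1 i) x * w2 (aidx n2 j) x)%:E)) ->
  (* S unit lower triangular with (lower triangular) inverse Sinv *)
  lower_unitriangular S -> lower_triangular Sinv ->
  mmul S Sinv = idmx R -> mmul Sinv S = idmx R ->
  (* Sb upper triangular invertible with (upper triangular) inverse Sbinv *)
  upper_triangular Sb -> (forall i, Sb i i != 0) -> upper_triangular Sbinv ->
  mmul Sb Sbinv = idmx R -> mmul Sbinv Sb = idmx R ->
  (* Gauss--Borel factorization g = S^{-1} Sb of the moment matrix *)
  (forall i j, Rintegral mu [set` I]
     (fun x => x ^+ (kidx n1 i + kidx n2 j) * w1 (aidx n1 i) x * w2 (aidx n2 j) x)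
     = mmul Sinv Sb i j) ->
  let J := mmul (mmul S (Upsilon R n1)) Sinv in
  J = mmul (mmul Sb (trm (Upsilon R n2))) Sbinv /\
  (forall a, (a < size n1)%N ->
     mvs J (mvs S (chi R n1 a)) = zmul (mvs S (chi R n1 a))) /\
  (forall b, (b < size n2)%N ->
     mvs (trm J) (mvs (trm Sbinv) (chi R n2 b)) = zmul (mvs (trm Sbinv) (chi R n2 b))) /\
  (forall b, (b < size n2)%N ->
     mvs J (mvs Sb (chistar R n2 b))
     = subs (zmul (mvs Sb (chistar R n2 b))) (cstv (mvr Sb (e0 R n2 b)))) /\
  (forall a, (a < size n1)%N ->
     mvs (trm J) (mvs (trm Sinv) (chistar R n1 a))
     = subs (zmul (mvs (trm Sinv) (chistar R n1 a))) (cstv (mvr (trm Sinv) (e0 R n1 a)))).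
Proof.
move=> Hn1 Hn2 _ [HSl _] HSil HSS HSSi HSb _ HSbi HSbSbi HSbiSb Hg J.
have HSr : rowfin S by exact: rowfin_lower.
have HSir : rowfin Sinv by exact: rowfin_lower.
have HSbc : colfin Sb by exact: colfin_upper.
have HSbic : colfin Sbinv by exact: colfin_upper.
have HY1 := rowfin_Ups R Hn1.
have HY2 := rowfin_Ups R Hn2.
have Hshift := shift_lem Hn1 Hn2 Hg.
change (gmul S Sinv = idmx R) in HSS.
change (gmul Sinv S = idmx R) in HSSi.
change (gmul Sb Sbinv = idmx R) in HSbSbi.
change (gmul Sbinv Sb = idmx R) in HSbiSb.
have HJr : rowfin J by apply: rowfin_mul => //; apply: rowfin_mul.
have EJ : J = gmul (gmul Sb (trm (Upsilon R n2))) Sbinv.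
  rewrite -[J]gmul_id_r -HSbSbi -(assoc_rc _ HJr HSbic); congr gmul.
  rewrite /J (assoc_rc _ (rowfin_mul HSr HY1) HSbc) (assoc_rr _ HSr HY1) Hshift.
  rewrite -(assoc_rc _ HSr (colfin_trm HY2)); congr gmul.
  by rewrite -(assoc_rc _ HSr HSbc) HSS gmul_id_l.
have ETJ : trm J = gmul (gmul (trm Sbinv) (Upsilon R n2)) (trm Sb).
  rewrite EJ; change (trm (mmul (mmul Sb (trm (Upsilon R n2))) Sbinv) =
    gmul (gmul (trm Sbinv) (Upsilon R n2)) (trm Sb)).
  rewrite !trm_mul trmK; change (gmul (trm Sbinv) (gmul (Upsilon R n2) (trm Sb)) =
    gmul (gmul (trm Sbinv) (Upsilon R n2)) (trm Sb)).
  by rewrite (assoc_rr _ (rowfin_trm HSbic) HY2).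
have ETJ2 : trm J = gmul (gmul (trm Sinv) (trm (Upsilon R n1))) (trm S).
  rewrite /J; change (trm (mmul (mmul S (Upsilon R n1)) Sinv) =
    gmul (gmul (trm Sinv) (trm (Upsilon R n1))) (trm S)).
  rewrite !trm_mul; change (gmul (trm Sinv) (gmul (trm (Upsilon R n1)) (trm S)) =
    gmul (gmul (trm Sinv) (trm (Upsilon R n1))) (trm S)).
  by rewrite (assoc_cc _ (colfin_trm HY1) (colfin_trm HSr)).
have HTJr : rowfin (trm J).
  by rewrite ETJ; apply: rowfin_mul; [apply: rowfin_mul => //; apply: rowfin_trm|apply: rowfin_trm].
split; first exact: EJ.
split.
  move=> a _; change (gmul J (gmul S (chi R n1 a)) = gmul S (zmul (chi R n1 a))).
  apply: eig1 => //; [exact: colfin_chi|exact: Ups_chi].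
split.
  move=> b _; rewrite ETJ.
  change (gmul (gmul (gmul (trm Sbinv) (Upsilon R n2)) (trm Sb)) (gmul (trm Sbinv) (chi R n2 b))
    = gmul (trm Sbinv) (zmul (chi R n2 b))).
  apply: eig1 => //; [exact: rowfin_trm|exact: rowfin_trm|exact: colfin_chi| |exact: Ups_chi].
  by change (mmul (trm Sb) (trm Sbinv) = idmx R); rewrite -trm_mul (HSbiSb : mmul Sbinv Sb = idmx R) trm_id.
split.
  move=> b _; change (gmul J (gmul Sb (chistar R n2 b))
     = subs (zmul (gmul Sb (chistar R n2 b))) (cstv (mvr Sb (e0 R n2 b)))).
  rewrite -(@lin_lem R Sb (chistar R n2 b) (e0 R n2 b) _ (@colfin_chistar R n2 b Hn2) (fun l => @e0_bound R n2 b l Hn2)).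
  apply: (eig2 HJr HSbc HSbic (colfin_trm HY2) (@colfin_chistar R n2 b Hn2) EJ HSbiSb).
  exact: Ups_chistar.
move=> a _; change (gmul (trm J) (gmul (trm Sinv) (chistar R n1 a))
   = subs (zmul (gmul (trm Sinv) (chistar R n1 a))) (cstv (mvr (trm Sinv) (e0 R n1 a)))).
rewrite -(@lin_lem R (trm Sinv) (chistar R n1 a) (e0 R n1 a) _ (@colfin_chistar R n1 a Hn1) (fun l => @e0_bound R n1 a l Hn1)).
apply: (eig2 HTJr (colfin_trm HSir) (colfin_trm HSr) (colfin_trm HY1) (@colfin_chistar R n1 a Hn1) ETJ2).
  by change (mmul (trm S) (trm Sinv) = idmx R); rewrite -trm_mul (HSSi : mmul Sinv S = idmx R) trm_id.
exact: Ups_chistar.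
Qed.
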